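(* Let $C\subset\mathbb{R}^d$ be an origin-symmetric $d$-polytope and let $\Lambda\subset\mathbb{R}^d$ be a $d$-dimensional lattice, and let $C^\star=\{y: x\cdot y\le1\ \forall x\in C\}$ be the polar body. (1) The width directions of $C$ with respect to $\Lambda$ are exactly the diameter directions of $C^\star$ with respect to $\Lambda^\star$. (2) $C$ is lattice reduced with respect to $\Lambda$ if and only if $C^\star$ is lattice complete with respect to $\Lambda^\star$.
   Context: A lattice $\Lambda\subset\mathbb{R}^d$ is a discrete subgroup spanning $\mathbb{R}^d$; $\Lambda^\star=\{y: x\cdot y\in\mathbb{Z}\ \forall x\in\Lambda\}$ is its dual lattice. For a convex body $K$ (compact convex, non-empty interior) and a lattice $\Gamma$: the lattice width is $\mathrm{wdt}_\Gamma(K)=\min_{y\in\Gamma^\star\setminus\{0\}}\max_{a,b\in K}y\cdot(a-b)$, and width directions are the $y\in\Gamma^\star\setminus\{0\}$ attaining it. A segment $[a,b]$ is a lattice segment w.r.t. $\Gamma$ if $b-a$ is parallel to a nonzero vector of $\Gamma$; its lattice length is $|b-a|/|v|$ with $v$ the generator of $\Gamma\cap\mathrm{span}\{b-a\}$ that is a positive multiple of $b-a$; $\mathrm{diam}_\Gamma(K)$ is the maximal lattice length of a lattice segment in $K$; diameter directions are the $v\in\Gamma\setminus\{0\}$ such that $K$ contains a segment $[a,a+\mathrm{diam}_\Gamma(K)v]$. $K$ is lattice reduced w.r.t. $\Gamma$ if no convex body $K'\subsetneq K$ has the same lattice width; lattice complete if no convex body $K'\supsetneq K$ has the same lattice diameter.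 *)

(* Defs.v *)
(* Points of R^d are row vectors 'rV[R]_d,
   R : realType; the topology on 'rV[R]_d is the (product = Euclidean) one
   provided by MathComp-Analysis. *)
From mathcomp Require Import all_boot all_algebra all_classical all_reals all_analysis.
Set Implicit Arguments. Unset Strict Implicit. Unset Printing Implicit Defensive.
Import GRing.Theory Num.Theory numFieldNormedType.Exports.
Local Open Scope ring_scope.
Local Open Scope classical_set_scope.

Section LatticeGeometry.
Variables (R : realType) (d : nat).
Notation vec := 'rV[R]_d.

Definition dot (x y : vec) : R := \sum_(i < d) x 0 i * y 0 i.
Definition enorm (x : vec) : R := Num.sqrt (dot x x).

Definition is_lattice (L : set vec) : Prop :=
  [/\ L 0,
      (forall x y, L x -> L y -> L (x - y)),
      (exists2 e : R, 0 < e & forall x, L x -> ball (0 : vec) e x -> x = 0)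
    & (forall x : vec, exists n (c : 'I_n -> R) (v : 'I_n -> vec),
          (forall i, L (v i)) /\ x = \sum_(i < n) c i *: v i)].

Definition dual (L : set vec) : set vec :=
  [set y | forall x, L x -> dot x y \is a Num.int].

Definition convex_set (K : set vec) : Prop :=
  forall a b (t : R), K a -> K b -> 0 <= t <= 1 -> K ((1 - t) *: a + t *: b).

Definition convex_body (K : set vec) : Prop :=
  [/\ compact K, convex_set K & exists x, K° x].

Definition polytope (C : set vec) : Prop :=
  exists n (v : 'I_n -> vec),
    C = [set x | exists lam : 'I_n -> R,
                  [/\ forall i, 0 <= lam i, \sum_(i < n) lam i = 1
                    & x = \sum_(i < n) lam i *: v i]].

Definition full_polytope (C : set vec) : Prop := polytope C /\ exists x, C° x.

Definition origin_symmetric (C : set vec) : Prop := forall x, C x -> C (- x).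

Definition polar (C : set vec) : set vec := [set y | forall x, C x -> dot x y <= 1].

Definition dir_width (K : set vec) (y : vec) : R :=
  sup [set r | exists a b, [/\ K a, K b & r = dot y (a - b)]].

Definition lattice_width (L K : set vec) : R :=
  inf [set w | exists y, [/\ dual L y, y != 0 & w = dir_width K y]].

Definition width_direction (L K : set vec) (y : vec) : Prop :=
  [/\ dual L y, y != 0 & dir_width K y = lattice_width L K].

Definition seg_in (K : set vec) (a b : vec) : Prop :=
  forall t : R, 0 <= t <= 1 -> K ((1 - t) *: a + t *: b).

Definition lattice_segment (L : set vec) (a b : vec) : Prop :=
  a != b /\ exists v, [/\ L v, v != 0 & exists t : R, b - a = t *: v].

Definition seg_generator (L : set vec) (a b v : vec) : Prop :=
  [/\ L v, (exists s : R, 0 < s /\ v = s *: (b - a))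
    & forall w, L w -> (exists t : R, w = t *: (b - a)) ->
         exists k : int, w = k%:~R *: v].

Definition lattice_length (L : set vec) (a b : vec) (l : R) : Prop :=
  exists v, seg_generator L a b v /\ l = enorm (b - a) / enorm v.

Definition lattice_diam (L K : set vec) : R :=
  sup [set l | exists a b, [/\ seg_in K a b, lattice_segment L a b
                             & lattice_length L a b l]].

Definition diam_direction (L K : set vec) (v : vec) : Prop :=
  [/\ L v, v != 0 & exists a, seg_in K a (a + lattice_diam L K *: v)].

Definition lattice_reduced (L K : set vec) : Prop :=
  ~ exists K', [/\ convex_body K', K' `<=` K, K' != K
                 & lattice_width L K' = lattice_width L K].

Definition lattice_complete (L K : set vec) : Prop :=
  ~ exists K', [/\ convex_body K', K `<=` K', K' != K
                 & lattice_diam L K' = lattice_diam L K].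

End LatticeGeometry.

(* Main.v *)
Require Import Defs.
From mathcomp Require Import all_boot all_order all_algebra all_classical all_reals all_analysis.
From mathcomp Require Import ring lra zify.
Import Order.TTheory GRing.Theory Num.Theory numFieldNormedType.Exports.
Local Open Scope ring_scope.
Local Open Scope classical_set_scope.
Set Implicit Arguments. Unset Strict Implicit. Unset Printing Implicit Defensive.

Section Aux.
Variables (R : realType) (d : nat).
Notation vec := 'rV[R]_d.
Implicit Types (x y z a b : vec) (K : set vec).

Lemma dotC x y : dot x y = dot y x.
Proof. by apply: eq_bigr => i _; rewrite mulrC. Qed.
Lemma dotDl x y z : dot (x + y) z = dot x z + dot y z.
Proof. by rewrite /dot -big_split; apply: eq_bigr => i _; rewrite mxE mulrDl. Qed.
Lemma dotDr x y z : dot z (x + y) = dot z x + dot z y.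
Proof. by rewrite dotC dotDl !(dotC z). Qed.
Lemma dotZl (c : R) x y : dot (c *: x) y = c * dot x y.
Proof. by rewrite /dot mulr_sumr; apply: eq_bigr => i _; rewrite mxE mulrA. Qed.
Lemma dotZr (c : R) x y : dot y (c *: x) = c * dot y x.
Proof. by rewrite dotC dotZl dotC. Qed.
Lemma dotNl x y : dot (- x) y = - dot x y.
Proof. by rewrite -scaleN1r dotZl mulN1r. Qed.
Lemma dotNr x y : dot y (- x) = - dot y x.
Proof. by rewrite dotC dotNl dotC. Qed.
Lemma dotBl x y z : dot (x - y) z = dot x z - dot y z.
Proof. by rewrite dotDl dotNl. Qed.
Lemma dotBr x y z : dot z (x - y) = dot z x - dot z y.
Proof. by rewrite dotDr dotNr. Qed.
Lemma dot0l x : dot 0 x = 0.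
Proof. by rewrite /dot big1 // => i _; rewrite mxE mul0r. Qed.
Lemma dot0r x : dot x 0 = 0.
Proof. by rewrite dotC dot0l. Qed.
Lemma dot_ge0 x : 0 <= dot x x.
Proof. by apply: sumr_ge0 => i _; rewrite -expr2 sqr_ge0. Qed.
Lemma dot_coord x j : `|x 0 j| ^+ 2 <= dot x x.
Proof.
rewrite /dot (bigD1 j) //= real_normK ?num_real // expr2 lerDl.
by apply: sumr_ge0 => i _; rewrite -expr2 sqr_ge0.
Qed.
Lemma dot_eq0 x : dot x x = 0 -> x = 0.
Proof.
move=> h; apply/rowP => j; rewrite mxE.
have := dot_coord x j; rewrite h => h2.
have : `|x 0 j| ^+ 2 = 0 by apply/eqP; rewrite eq_le h2 sqr_ge0.
by move/eqP; rewrite sqrf_eq0 normr_eq0 => /eqP.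
Qed.
Lemma dot_abs x y : `|dot x y| <= \sum_i `|x 0 i| * `|y 0 i|.
Proof.
rewrite /dot; apply: le_trans (ler_norm_sum _ _ _) _.
by apply: ler_sum => i _; rewrite normrM.
Qed.

Definition cbnd K (M : R) := forall x, K x -> forall j, `|x 0 j| <= M.
Definition nrm1 (y : vec) : R := \sum_i `|y 0 i|.
Lemma nrm1_ge0 y : 0 <= nrm1 y.
Proof. by apply: sumr_ge0. Qed.

Lemma dot_bnd x y (M : R) : (forall j, `|x 0 j| <= M) -> `|dot y x| <= nrm1 y * M.
Proof.
move=> h; apply: le_trans (dot_abs _ _) _; rewrite /nrm1 mulr_suml.
by apply: ler_sum => i _; apply: ler_wpM2l.
Qed.

Lemma coord_le_norm x j : `|x 0 j| <= `|x|.
Proof.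
have -> : `|x| = mx_norm x by []. rewrite mx_normrE.
have /mapP[k Hk ->] : `|x 0 j| \in [seq `|x k.1 k.2| | k : 'I_1 * 'I_d].
  by apply/mapP; exists (0, j) => //=; rewrite mem_enum.
by apply/bigmax_geP; right => /=; exists k.
Qed.

Lemma norm_le_coord x (M : R) : 0 <= M -> (forall j, `|x 0 j| <= M) -> `|x| <= M.
Proof.
move=> M0 h; have -> : `|x| = mx_norm x by []. rewrite mx_normrE.
apply/bigmax_leP; split => // -[i j] _ /=; by rewrite (ord1 i).
Qed.

Lemma ballE' x e y : ball x e y <-> (0 < e /\ forall j, `|x 0 j - y 0 j| < e).
Proof.
split.
- move=> [e0 h]; split => // j; exact: (h 0 j).
- move=> [e0 h]; split => // i j; rewrite (ord1 i); exact: h.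
Qed.

Lemma nbhsE' x A : nbhs x A <-> exists2 e : R, 0 < e & forall y, (forall j, `|x 0 j - y 0 j| < e) -> A y.
Proof.
rewrite nbhs_ballP; split.
- move=> [e e0 h]; exists e => // y hy; apply: h; exact/ballE'.
- move=> [e e0 h]; exists e => // y /ballE' [_]; exact: h.
Qed.

Lemma compact_cbnd K : compact K -> exists M, 0 <= M /\ cbnd K M.
Proof.
move=> /compact_bounded [M [_ h]].
exists (`|M| + 1); split; first by rewrite addr_ge0.
move=> x Kx j; apply: le_trans (coord_le_norm x j) _.
apply: (h (`|M| + 1)) => //; apply: le_lt_trans (ler_norm M) _; rewrite ltrDl; lra.
Qed.

Lemma cbnd_bounded K M : 0 <= M -> cbnd K M -> bounded_set K.
Proof.
move=> M0 h; exists M; split; first by rewrite num_real.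
move=> r Mr x Kx /=; apply: norm_le_coord; first lra.
by move=> j; apply: le_trans (h _ Kx j) _; apply: ltW.
Qed.


Definition Wset K y := [set r | exists a b, [/\ K a, K b & r = dot y (a - b)]].
Definition Pset K := [set y | forall a b, K a -> K b -> dot y (a - b) <= 2].

Lemma dirW K y : dir_width K y = sup (Wset K y).
Proof. by []. Qed.

Lemma dot_bnd2 K M y a b : cbnd K M -> K a -> K b -> `|dot y (a - b)| <= nrm1 y * (M + M).
Proof.
move=> h Ka Kb; apply: dot_bnd => j; rewrite !mxE.
by apply: le_trans (ler_normB _ _) _; apply: lerD; apply: h.
Qed.

Lemma W_has_sup K M y : cbnd K M -> (exists a, K a) -> has_sup (Wset K y).
Proof.
move=> h [a Ka]; split; first by exists (dot y (a - a)), a, a.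
exists (nrm1 y * (M + M)) => r [a' [b' [Ka' Kb' ->]]].
by apply: le_trans (ler_norm _) (dot_bnd2 _ h Ka' Kb').
Qed.

Lemma W_ge K M y a b : cbnd K M -> K a -> K b -> dot y (a - b) <= dir_width K y.
Proof.
move=> h Ka Kb; apply: sup_upper_bound; first exact: (W_has_sup y h (ex_intro _ a Ka)).
by exists a, b.
Qed.

Lemma W_le K y c : (exists a, K a) ->
  (forall a b, K a -> K b -> dot y (a - b) <= c) -> dir_width K y <= c.
Proof.
move=> [a Ka] h; apply: ge_sup; first by exists (dot y (a - a)), a, a.
by move=> r [a' [b' [Ka' Kb' ->]]]; apply: h.
Qed.

Lemma W_gt K M y c : cbnd K M -> (exists a, K a) -> c < dir_width K y ->
  exists a b, [/\ K a, K b & c < dot y (a - b)].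
Proof.
move=> h ne lt; have [r [a [b [Ka Kb ->]]] hr] :=
  sup_adherent (eps := dir_width K y - c) (ltac:(rewrite subr_gt0 //)) (W_has_sup y h ne).
by exists a, b; split => //; move: hr; rewrite /dir_width; lra.
Qed.

Lemma W_ge0 K M y : cbnd K M -> (exists a, K a) -> 0 <= dir_width K y.
Proof. move=> h [a Ka]; apply: le_trans (W_ge y h Ka Ka); by rewrite subrr dot0r. Qed.

Lemma dot_delta y j : dot y (delta_mx 0 j) = y 0 j.
Proof.
rewrite /dot (bigD1 j) //= big1 ?addr0; first by rewrite mxE !eqxx mulr1.
by move=> i /negPf hij; rewrite mxE hij andbF mulr0.
Qed.

Definition ballin K (x0 : vec) (e : R) := 0 < e /\ forall w : vec, (forall j, `|w 0 j| < e) -> K (x0 + w).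

Lemma W_coord K M y x0 e : cbnd K M -> ballin K x0 e -> forall j, e * `|y 0 j| <= dir_width K y.
Proof.
move=> h [e0 hb] j.
pose s := if 0 <= y 0 j then e / 2 else - (e / 2).
pose w := s *: delta_mx (0 : 'I_1) j.
have hw : forall k, `|w 0 k| < e.
  move=> k; rewrite /w !mxE eqxx /=; case: (k == j) => /=.
    rewrite mulr1 /s; case: ifP => _; rewrite ?normrN gtr0_norm; lra.
  by rewrite mulr0 normr0.
have hw' : forall k, `|(- w) 0 k| < e by move=> k; rewrite mxE normrN.
have := W_ge y h (hb _ hw) (hb _ hw').
have -> : x0 + w - (x0 + - w) = 2%:R *: w.
  by rewrite opprD opprK addrACA subrr add0r scaler_nat mulr2n.
rewrite /w dotZr dotZr dot_delta /s; case: ifP => hy.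
  rewrite ger0_norm //; lra.
rewrite ltr0_norm ?ltNge ?hy //; lra.
Qed.

Lemma nonzero_coord (y : vec) : y != 0 -> exists j, y 0 j != 0.
Proof.
move=> hy; apply: contrapT => h; move/eqP: hy; apply; apply/rowP => j; rewrite mxE.
by apply: contrapT => hj; apply: h; exists j; apply/eqP.
Qed.

Lemma W_pos K M y x0 e : cbnd K M -> ballin K x0 e -> y != 0 -> 0 < dir_width K y.
Proof.
move=> h hb /nonzero_coord [j hj]; apply: lt_le_trans (W_coord y h hb j).
by apply: mulr_gt0; [case: hb | rewrite normr_gt0].
Qed.

Lemma cb_parts K : convex_body K ->
  [/\ exists M, 0 <= M /\ cbnd K M, Defs.convex_set K, exists x0 e, ballin K x0 e & compact K].
Proof.
move=> [cK cvK [x0 /nbhsE' [e e0 he]]]; split; [exact: compact_cbnd | exact: cvK | | exact: cK].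
exists x0, e; split => // w hw; apply: he => j; rewrite mxE opprD addNKr normrN; exact: hw.
Qed.

Lemma Pset_sym K y : Pset K y -> Pset K (- y).
Proof. by move=> h a b Ka Kb; rewrite dotNl -dotNr opprB; apply: h. Qed.

Lemma Pset_conv K : Defs.convex_set (Pset K).
Proof.
move=> y1 y2 t h1 h2 /andP[t0 t1] a b Ka Kb.
rewrite dotDl !dotZl; have := h1 _ _ Ka Kb; have := h2 _ _ Ka Kb.
move: (dot y1 (a - b)) (dot y2 (a - b)) => u v hu hv; nra.
Qed.

Lemma Pset_anti K K' : K `<=` K' -> Pset K' `<=` Pset K.
Proof. by move=> s y h a b Ka Kb; apply: h; apply: s. Qed.

Lemma sum_const_lt (f : 'I_d -> R) (r : R) : (forall j, f j <= r) -> \sum_j f j <= d%:R * r.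
Proof.
move=> h; apply: le_trans (ler_sum _ (fun j _ => h j)) _.
by rewrite sumr_const card_ord mulr_natl.
Qed.

Lemma Pset_ball K M : 0 <= M -> cbnd K M ->
  exists2 rho : R, 0 < rho & forall y, (forall j, `|y 0 j| < rho) -> Pset K y.
Proof.
move=> M0 h; have dM : 0 <= d%:R * M by apply: mulr_ge0.
exists (1 / (d%:R * M + 1)); first by apply: divr_gt0 => //; lra.
move=> y hy a b Ka Kb; apply: le_trans (ler_norm _) _.
apply: le_trans (dot_bnd2 _ h Ka Kb) _.
have hn : nrm1 y <= d%:R * (1 / (d%:R * M + 1)).
  by apply: sum_const_lt => j; apply: ltW.
have -> : 2 = (d%:R * (1 / (d%:R * M + 1))) * (M + M) + 2 / (d%:R * M + 1).
  field; lra.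
rewrite -[X in X <= _]addr0; apply: lerD; last by apply: divr_ge0 => //; lra.
by apply: ler_wpM2r => //; lra.
Qed.

Lemma Pset_closed K : closed (Pset K).
Proof.
move=> y cy a b Ka Kb; rewrite leNgt; apply/negP => hlt.
set c := a - b; set g := dot y c - 2.
have g0 : 0 < g by rewrite /g; lra.
have n0 := nrm1_ge0 c.
have r0 : 0 < g / (nrm1 c + 1) by apply: divr_gt0 => //; lra.
have [y' [Py' By']] := cy _ (nbhsx_ballx y _ r0).
have := Py' _ _ Ka Kb; rewrite -/c => h2.
move: By' => /ballE' [_ hb].
have hb' : forall j, `|(y - y') 0 j| <= g / (nrm1 c + 1).
  by move=> j; rewrite !mxE; apply: ltW; apply: hb.
have := dot_bnd c hb'; rewrite dotBr !(dotC c) => h3.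
have h4 : nrm1 c * (g / (nrm1 c + 1)) < g.
  rewrite mulrA ltr_pdivrMr; last lra. nra.
have := le_trans (ler_norm _) h3; move: h4 h2; rewrite /g; lra.
Qed.


Lemma Pset_cbnd K M x0 e : cbnd K M -> ballin K x0 e -> cbnd (Pset K) (2 / e).
Proof.
move=> h hb y Py j; have e0 : 0 < e by case: hb.
have := W_coord y h hb j.
have ne : exists a, K a by exists (x0 + 0); case: hb => _ hb; apply: hb => k; rewrite mxE normr0.
have := W_le ne Py => h1 h2; rewrite ler_pdivlMr // mulrC; apply: le_trans h2 h1.
Qed.

Lemma Pset_cb K : convex_body K -> convex_body (Pset K).
Proof.
move=> /cb_parts [[M [M0 hM]] cvK [x0 [e hb]] cK].
have e0 : 0 < e by case: hb.
split.
- apply: bounded_closed_compact; last exact: Pset_closed.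
  apply: (@cbnd_bounded _ (2 / e)); last exact: Pset_cbnd hM hb.
  by apply: divr_ge0 => //; apply: ltW.
- exact: Pset_conv.
- have [rho r0 hr] := Pset_ball M0 hM.
  exists 0; apply/nbhsE'; exists rho => // y hy; apply: hr => j.
  by move: (hy j); rewrite mxE sub0r normrN.
Qed.

Lemma closed_gap K p : closed K -> ~ K p ->
  exists2 e : R, 0 < e & forall x, K x -> exists j, e <= `|p 0 j - x 0 j|.
Proof.
move=> cK nKp.
have : ~ closure K p by move=> /cK.
move=> /existsNP [B /not_implyP [nB /set0P/negP]]; rewrite negbK => /eqP KB.
move/nbhsE': nB => [e e0 he]; exists e => // x Kx.
apply: contrapT => hx; have : (K `&` B) x.
  split => //; apply: he => j; rewrite ltNge; apply/negP => hj; apply: hx; by exists j.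
by rewrite KB.
Qed.

Lemma dot_expand (u w : vec) (c : R) :
  dot (u + c *: w) (u + c *: w) = dot u u + 2 * c * dot u w + c ^+ 2 * dot w w.
Proof.
rewrite !dotDl !dotDr !dotZl !dotZr (dotC w u); ring.
Qed.

Lemma sq_le_bnd (a N : R) : `|a| <= N -> a * a <= N * N.
Proof.
move=> h; have N0 : 0 <= N by apply: le_trans h.
rewrite -expr2 -real_normK ?num_real // expr2; exact: ler_pM.
Qed.

Lemma dot_cbnd K M x q : cbnd K M -> K x -> K q ->
  dot (x - q) (x - q) <= d%:R * ((M + M) * (M + M)).
Proof.
move=> h Kx Kq; apply: sum_const_lt => j; apply: sq_le_bnd; rewrite !mxE.
by apply: le_trans (ler_normB _ _) _; apply: lerD; apply: h.
Qed.

Lemma sep_core K M p (delta : R) : Defs.convex_set K -> 0 <= M -> cbnd K M -> (exists a, K a) ->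
  0 < delta -> (forall x, K x -> delta <= dot (x - p) (x - p)) ->
  exists z (g : R), 0 < g /\ forall x, K x -> dot z x <= dot z p - g.
Proof.
move=> cvK M0 hM [a0 Ka0] dl0 hd.
pose S := [set r | exists x, K x /\ r = dot (x - p) (x - p)].
have Sne : S !=set0 by exists (dot (a0 - p) (a0 - p)), a0.
have Slb : has_lbound S by exists 0 => r [x [_ ->]]; apply: dot_ge0.
set d0 := inf S.
have hd0 : delta <= d0 by apply: lb_le_inf => // r [x [Kx ->]]; apply: hd.
have d00 : 0 < d0 by apply: lt_le_trans hd0.
set B := d%:R * ((M + M) * (M + M)) + 1.
have B1 : 1 <= B.
  by rewrite /B lerDr; apply: mulr_ge0 => //; apply: mulr_ge0; apply: addr_ge0.
set t := d0 / (d0 + 2 * B).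
have t0 : 0 < t by apply: divr_gt0 => //; lra.
have t1 : t <= 1 by rewrite ler_pdivrMr; lra.
have tB : t * B <= d0 / 2.
  rewrite /t mulrAC ler_pdivrMr; last lra.
  have -> : d0 / 2 * (d0 + 2 * B) = d0 * d0 / 2 + d0 * B by field.
  have := mulr_ge0 (ltW d00) (ltW d00); lra.
have e0 : 0 < t * d0 / 2 by apply: divr_gt0 => //; apply: mulr_gt0.
have := inf_adherent e0 (conj Sne Slb); case=> r [q [Kq ->]] hq.
rewrite -/d0 in hq.
exists (p - q), (d0 / 2); split; first by apply: divr_gt0.
move=> x Kx.
have Ky := cvK _ _ _ Kq Kx (introT andP (conj (ltW t0) t1)).
have hy : d0 <= dot ((1 - t) *: q + t *: x - p) ((1 - t) *: q + t *: x - p).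
  by apply: ge_inf => //; exists ((1 - t) *: q + t *: x).
have eqy : (1 - t) *: q + t *: x - p = (q - p) + t *: (x - q).
  by apply/rowP => k; rewrite !mxE; ring.
rewrite eqy dot_expand in hy.
have hc := dot_cbnd hM Kx Kq; rewrite -/B in hc.
have ha : d0 <= dot (q - p) (q - p) by apply: ge_inf => //; exists q.
have e1 : dot (p - q) x = dot (p - q) p - dot (q - p) (q - p) + - dot (q - p) (x - q).
  have -> : q - p = - (p - q) by rewrite opprB.
  rewrite dotNl dotNl dotNr opprK !dotBr !dotBl; ring.
rewrite e1.
move: hy hq ha hc tB t0; set A := dot (q - p) (q - p); set b := dot (q - p) (x - q); set c := dot (x - q) (x - q).
move=> hy hq ha hc tB t0.
have h1 : t * (2 * - b) < t * (d0 / 2 + t * c).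
  have -> : t * (2 * - b) = - (2 * t * b) by ring.
  have -> : t * (d0 / 2 + t * c) = t * d0 / 2 + t ^+ 2 * c by ring.
  lra.
rewrite ltr_pM2l // in h1.
have h2 : t * c <= t * B by apply: ler_wpM2l; [apply: ltW | rewrite /B; lra].
lra.
Qed.



Lemma sep_closed K M p : Defs.convex_set K -> closed K -> 0 <= M -> cbnd K M -> (exists a, K a) ->
  ~ K p -> exists z (g : R), 0 < g /\ forall x, K x -> dot z x <= dot z p - g.
Proof.
move=> cvK cK M0 hM ne nKp; have [e e0 he] := closed_gap cK nKp.
apply: (sep_core (delta := e * e) cvK M0 hM ne (mulr_gt0 e0 e0)).
move=> x Kx; have [j hj] := he _ Kx.
apply: le_trans (dot_coord _ j); rewrite expr2 !mxE distrC.
by apply: ler_pM => //; apply: ltW.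
Qed.

Lemma int_small (x : R) : x \is a Num.int -> `|x| < 1 -> x = 0.
Proof.
move=> /intrP [m ->]; rewrite -intr_norm.
have -> : (1 : R) = 1%:~R by [].
rewrite ltr_int => h; have -> : m = 0 by lia.
by [].
Qed.

Lemma dot_suml n (f : 'I_n -> vec) z : dot (\sum_(i < n) f i) z = \sum_(i < n) dot (f i) z.
Proof.
apply: (big_morph (fun x => dot x z)); first by move=> u v; rewrite dotDl.
exact: dot0l.
Qed.

Lemma coord_le_nrm1 (z : vec) j : `|z 0 j| <= nrm1 z.
Proof.
rewrite /nrm1 (bigD1 j) //= lerDl; by apply: sumr_ge0.
Qed.

Definition enorm_ (x : vec) := Num.sqrt (dot x x).

Lemma enormZ (c : R) (x : vec) : enorm (c *: x) = `|c| * enorm x.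
Proof.
rewrite /enorm dotZl dotZr mulrA -expr2 sqrtrM ?sqr_ge0 //; by rewrite sqrtr_sqr.
Qed.

Lemma enorm_gt0 (x : vec) : x != 0 -> 0 < enorm x.
Proof.
move=> hx; rewrite /enorm sqrtr_gt0 lt_neqAle dot_ge0 andbT.
by apply/eqP => h; move/eqP: hx; apply; apply: dot_eq0.
Qed.

Section Lat.
Variable L : set vec.
Hypothesis hL : is_lattice L.

Lemma dual_sub y z : dual L y -> dual L z -> dual L (y - z).
Proof. by move=> hy hz x Lx; rewrite dotBr; apply: rpredB; [apply: hy | apply: hz]. Qed.

Lemma dual_int y (m : int) : dual L y -> dual L (m%:~R *: y).
Proof. by move=> hy x Lx; rewrite dotZr; apply: rpredM; [apply: intr_int | apply: hy]. Qed.

Lemma dual_discrete : exists2 r : R, 0 < r &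
  forall z, dual L z -> (forall j, `|z 0 j| < r) -> z = 0.
Proof.
case: hL => _ _ _ hspan.
have hj : forall j : 'I_d, exists r : R, 0 < r /\
    forall z, dual L z -> (forall k, `|z 0 k| < r) -> z 0 j = 0.
  move=> j; have [n [c [v [Lv hv]]]] := hspan (delta_mx 0 j).
  set Bj := \sum_(i < n) nrm1 (v i).
  have Bj0 : 0 <= Bj by apply: sumr_ge0 => i _; apply: nrm1_ge0.
  exists (1 / (Bj + 1)); split; first by apply: divr_gt0; lra.
  move=> z Dz hz.
  have hi : forall i, dot (v i) z = 0.
    move=> i; apply: int_small; first by apply: Dz.
    apply: le_lt_trans (dot_bnd (v i) (fun k => ltW (hz k))) _.
    have : nrm1 (v i) <= Bj by rewrite /Bj (bigD1 i) //= lerDl; apply: sumr_ge0 => k _; apply: nrm1_ge0.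
    move=> hvi; rewrite mulrA ltr_pdivrMr; last lra.
    have := nrm1_ge0 (v i); lra.
  rewrite -dot_delta dotC hv dot_suml big1 // => i _.
  by rewrite dotZl hi mulr0.
have [f hf] := choice hj.
set S := \sum_j (f j)^-1.
have S0 : 0 <= S by apply: sumr_ge0 => j _; rewrite invr_ge0; apply: ltW; case: (hf j).
exists (1 / (1 + S)); first by apply: divr_gt0; lra.
move=> z Dz hz; apply/rowP => j; rewrite mxE.
have [fj0 hfj] := hf j; apply: hfj => // k.
apply: lt_le_trans (hz k) _.
rewrite ler_pdivrMr; last lra.
have : (f j)^-1 <= S by rewrite /S (bigD1 j) //= lerDl; apply: sumr_ge0 => i _; rewrite invr_ge0; apply: ltW; case: (hf i).
move=> h; have h2 : f j * (f j)^-1 <= f j * S by apply: ler_wpM2l => //; apply: ltW.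
rewrite mulfV ?lt0r_neq0 // in h2. rewrite mulrDr mulr1; lra.
Qed.

End Lat.
End Aux.

Section Lat2.
Variables (R : realType) (d : nat).
Notation vec := 'rV[R]_d.
Variable L : set vec.
Hypothesis hL : is_lattice L.

Lemma dual_generator (z : vec) : dual L z -> z != 0 ->
  exists u (k : int), [/\ 0 < k, z = k%:~R *: u, dual L u &
    forall t : R, dual L (t *: z) -> exists m : int, t *: z = m%:~R *: u].
Proof.
move=> Dz nz.
have [r r0 hr] := dual_discrete hL.
have [j hj] := nonzero_coord nz.
have n0 : 0 < nrm1 z by apply: lt_le_trans (coord_le_nrm1 z j); rewrite normr_gt0.
set tau := r / nrm1 z.
have tau0 : 0 < tau by apply: divr_gt0.
have hpos : forall t, 0 < t -> dual L (t *: z) -> tau <= t.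
  move=> t t0 Dt; rewrite leNgt; apply/negP => ht.
  have : t *: z = 0.
    move: (hr _ Dt) => hr2; apply: hr2 => k; rewrite mxE normrM gtr0_norm //.
    have h1 : t * `|z 0 k| <= t * nrm1 z by apply: ler_wpM2l; [apply: ltW | apply: coord_le_nrm1].
    apply: le_lt_trans h1 _.
    by rewrite -ltr_pdivlMr.
  by move/eqP; rewrite scaler_eq0 (negbTE nz) orbF (gt_eqF t0).
pose G := [set t | 0 < t /\ dual L (t *: z)].
have G1 : G 1 by split; [lra | rewrite scale1r].
have Glb : has_lbound G by exists tau => t [t0 Dt]; apply: hpos.
have Gne : G !=set0 by exists 1.
set t0 := inf G.
have tau_t0 : tau <= t0 by apply: lb_le_inf => // t [tp Dt]; apply: hpos.
have Gt0 : G t0.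
  apply: contrapT => nG.
  have := inf_adherent tau0 (conj Gne Glb); case=> t1 [t1p Dt1] h1.
  have t01 : t0 <= t1 by apply: ge_inf.
  have t01' : t0 < t1.
    rewrite lt_neqAle t01 andbT; apply/eqP => e; apply: nG; rewrite e; by split.
  have e2 : 0 < t1 - t0 by rewrite subr_gt0.
  have := inf_adherent e2 (conj Gne Glb); case=> t2 [t2p Dt2] h2.
  have t02 : t0 <= t2 by apply: ge_inf.
  have : tau <= t1 - t2.
    apply: hpos; first by rewrite -/t0 in h2; lra.
    by rewrite scalerBl; apply: dual_sub.
  rewrite -/t0 in h1 h2; lra.
case: Gt0 => t0p Dt0.
have mult : forall t, dual L (t *: z) -> exists m : int, t = m%:~R * t0.
  move=> t Dt; exists (Num.floor (t / t0)).
  have /andP[fl1 fl2] := floor_itv (t / t0).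
  move: fl1 fl2; set m := Num.floor (t / t0) => fl1 fl2.
  rewrite ler_pdivlMr // in fl1.
  rewrite intrD ltr_pdivrMr // mulrDl mul1r in fl2.
  have Drem : dual L ((t - m%:~R * t0) *: z).
    rewrite scalerBl -scalerA; apply: dual_sub => //; exact: dual_int.
  case: (ltP 0 (t - m%:~R * t0)) => hr'.
    have : t0 <= t - m%:~R * t0 by apply: ge_inf => //; split.
    lra.
  lra.
have [k hk] := mult 1 (ltac:(by rewrite scale1r)).
have k0 : 0 < k.
  have : (0 : R) < k%:~R * t0 by rewrite -hk; lra.
  by rewrite pmulr_lgt0 // ltr0z.
exists (t0 *: z), k; split => //.
- by rewrite scalerA -hk scale1r.
- move=> t Dt; have [m hm] := mult t Dt; exists m; by rewrite scalerA -hm.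
Qed.

Lemma seg_len (z a b : vec) (s : R) : dual L z -> z != 0 -> 0 < s -> b - a = s *: z ->
  exists l, [/\ s <= l, lattice_segment (dual L) a b & lattice_length (dual L) a b l].
Proof.
move=> Dz nz s0 hab.
have [u [k [k0 zk Du hm]]] := dual_generator Dz nz.
have k1 : (1 : R) <= k%:~R by rewrite ler1z.
have sk0 : 0 < s * k%:~R by apply: mulr_gt0 => //; lra.
have hab' : b - a = (s * k%:~R) *: u by rewrite hab zk scalerA.
have nu : u != 0 by apply/eqP => u0; move/eqP: nz; apply; rewrite zk u0 scaler0.
exists (s * k%:~R); split.
- by rewrite -[leLHS]mulr1; apply: ler_wpM2l => //; apply: ltW.
- split.
    apply/eqP => eab; move: hab; rewrite eab subrr => /esym/eqP.
    by rewrite scaler_eq0 (negbTE nz) orbF (gt_eqF s0).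
  by exists z; split => //; exists s.
- exists u; split.
    split => //.
      exists (s * k%:~R)^-1; split; first by rewrite invr_gt0.
      by rewrite hab' scalerA mulVf ?scale1r // gt_eqF.
    move=> w Dw [t wt].
    have Dw' : dual L ((t * s) *: z) by rewrite -scalerA -hab -wt.
    have [m hm'] := hm _ Dw'; exists m; by rewrite wt hab scalerA.
  by rewrite hab' enormZ gtr0_norm // mulfK //; apply: lt0r_neq0; apply: enorm_gt0.
Qed.

Lemma len_inv (a b : vec) l : lattice_segment (dual L) a b -> lattice_length (dual L) a b l ->
  exists v, [/\ dual L v, v != 0, b - a = l *: v & 0 < l].
Proof.
move=> [nab _] [v [[Dv [s [s0 vs]] _] ->]].
have nba : b - a != 0 by rewrite subr_eq0 eq_sym.
have e0 := enorm_gt0 nba.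
exists v; split => //.
- by rewrite vs scaler_eq0 (negbTE nba) orbF gt_eqF.
- rewrite vs enormZ gtr0_norm // scalerA.
  have -> : enorm (b - a) / (s * enorm (b - a)) * s = 1.
    by field; apply/andP; split; apply: lt0r_neq0.
  by rewrite scale1r.
- rewrite vs enormZ gtr0_norm //; apply: divr_gt0 => //; exact: mulr_gt0.
Qed.

End Lat2.

Section Part1.
Variables (R : realType) (d : nat).
Notation vec := 'rV[R]_d.
Variable L : set vec.
Hypothesis hL : is_lattice L.
Implicit Types (K : set vec) (z y a b : vec).

Definition ND := exists z, dual L z /\ z != 0.
Definition Sset K := [set l | exists a b, [/\ seg_in (Pset K) a b,
   lattice_segment (dual L) a b & lattice_length (dual L) a b l]].

Lemma cb_ne K : convex_body K -> exists a, K a.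
Proof.
move=> /cb_parts [_ _ [x0 [e [e0 hb]]] _]; exists (x0 + 0); apply: hb => j.
by rewrite mxE normr0.
Qed.

Lemma width_lb K : convex_body K -> forall z, dual L z -> z != 0 ->
  lattice_width L K <= dir_width K z.
Proof.
move=> cK z Dz nz; have [_ _ _ _] := cb_parts cK.
have [[M [M0 hM]] _ _ _] := cb_parts cK.
apply: ge_inf; last by exists z.
exists 0 => w [y [_ _ ->]]; exact: W_ge0 hM (cb_ne cK).
Qed.

Lemma width_glb K c : ND -> (forall z, dual L z -> z != 0 -> c <= dir_width K z) ->
  c <= lattice_width L K.
Proof.
move=> [z0 [D0 n0]] h; apply: lb_le_inf; first by exists (dir_width K z0), z0.
by move=> w [y [Dy ny ->]]; apply: h.
Qed.

Lemma width_pos K : convex_body K -> ND -> 0 < lattice_width L K.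
Proof.
move=> cK nd; have [[M [M0 hM]] _ [x0 [e hb]] _] := cb_parts cK.
have e0 : 0 < e by case: hb.
have [r r0 hr] := dual_discrete hL.
apply: lt_le_trans (width_glb (c := e * r) nd _); first exact: mulr_gt0.
move=> z Dz nz.
have [j hj] : exists j, r <= `|z 0 j|.
  apply: contrapT => h; move/eqP: nz; apply; move: (hr _ Dz) => hr2; apply: hr2 => j.
  rewrite ltNge; apply/negP => hj; apply: h; by exists j.
apply: le_trans (W_coord z hM (conj e0 hb.2) j).
by apply: ler_wpM2l => //; apply: ltW.
Qed.

Lemma seg_ends K a b : seg_in K a b -> K a /\ K b.
Proof.
move=> hs; split.
  have := hs 0 (ltac:(by rewrite lexx ler01)); by rewrite subr0 scale1r scale0r addr0.
have := hs 1 (ltac:(by rewrite lexx ler01)); by rewrite subrr scale0r add0r scale1r.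
Qed.

Lemma len_bound K a b l : convex_body K -> seg_in (Pset K) a b ->
  lattice_segment (dual L) a b -> lattice_length (dual L) a b l ->
  exists v, [/\ dual L v, v != 0, l * dir_width K v <= 4 & 0 < l].
Proof.
move=> cK hs hseg hlen.
have [v [Dv nv hv l0]] := len_inv hseg hlen.
exists v; split => //.
have [Pa Pb] := seg_ends hs.
rewrite mulrC -ler_pdivlMr //.
apply: W_le; first exact: cb_ne.
move=> p q Kp Kq; rewrite ler_pdivlMr // mulrC -dotZl -hv dotBl.
have := Pb _ _ Kp Kq; have := Pa _ _ Kq Kp.
rewrite -(opprB p q) dotNr; lra.
Qed.

Lemma len_upper K l : convex_body K -> ND -> Sset K l -> l <= 4 / lattice_width L K.
Proof.
move=> cK nd [a [b [hs hseg hlen]]].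
have [v [Dv nv hl l0]] := len_bound cK hs hseg hlen.
have w0 := width_pos cK nd.
have hw := width_lb cK Dv nv.
rewrite ler_pdivlMr //.
have h2 : l * lattice_width L K <= l * dir_width K v by apply: ler_wpM2l => //; apply: ltW.
exact: le_trans h2 hl.
Qed.

Lemma len_lower K z : convex_body K -> dual L z -> z != 0 ->
  exists l, Sset K l /\ 4 / dir_width K z <= l.
Proof.
move=> cK Dz nz.
have [[M [M0 hM]] _ [x0 [e hb]] _] := cb_parts cK.
set W := dir_width K z.
have W0 : 0 < W by apply: W_pos hM hb nz.
have [l [hl hseg hlen]] := @seg_len _ _ _ hL z (- ((2 / W) *: z)) ((2 / W) *: z) (4 / W) Dz nz
  (ltac:(by apply: divr_gt0)) (ltac:(by apply/rowP => k; rewrite !mxE; ring)).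
exists l; split => //; exists (- ((2 / W) *: z)), ((2 / W) *: z); split => //.
move=> t /andP[t0 t1].
have -> : (1 - t) *: - ((2 / W) *: z) + t *: ((2 / W) *: z) = (2 / W * (2 * t - 1)) *: z.
  by apply/rowP => k; rewrite !mxE; ring.
move=> p q Kp Kq; rewrite dotZl.
have h1 := W_ge z hM Kp Kq; have h2 := W_ge z hM Kq Kp.
rewrite -(opprB p q) dotNr -/W in h2; rewrite -/W in h1.
move: (dot z (p - q)) h1 h2 => X h1 h2.
have hX : (2 * t - 1) * X <= W by nra.
have h3 : 2 / W * ((2 * t - 1) * X) <= 2 / W * W.
  by apply: ler_wpM2l => //; apply: divr_ge0 => //; apply: ltW.
have -> : 2 / W * (2 * t - 1) * X = 2 / W * ((2 * t - 1) * X) by ring.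
apply: (le_trans h3); by rewrite mulfVK ?lt0r_neq0.
Qed.

Lemma diam_eq K : convex_body K -> ND ->
  lattice_diam (dual L) (Pset K) = 4 / lattice_width L K.
Proof.
move=> cK nd; change (sup (Sset K) = 4 / lattice_width L K).
have w0 := width_pos cK nd.
have [[M [M0 hM]] _ [x0 [e hb]] _] := cb_parts cK.
have [z0 [D0 n0]] := nd.
have [l0 [Sl0 hl0]] := len_lower cK D0 n0.
have hs : has_sup (Sset K).
  split; first by exists l0.
  by exists (4 / lattice_width L K) => l Sl; apply: len_upper.
apply/eqP; rewrite eq_le; apply/andP; split.
  by apply: ge_sup; [exists l0 | move=> l Sl; apply: len_upper].
have Dl0 : l0 <= sup (Sset K) by apply: sup_upper_bound.
have W00 : 0 < dir_width K z0 by apply: W_pos hM hb n0.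
have D0p : 0 < sup (Sset K).
  apply: lt_le_trans Dl0; apply: lt_le_trans hl0; exact: divr_gt0.
have : 4 / sup (Sset K) <= lattice_width L K.
  apply: width_glb => // z Dz nz.
  have [l [Sl hl]] := len_lower cK Dz nz.
  have Wz : 0 < dir_width K z by apply: W_pos hM hb nz.
  have := le_trans hl (sup_upper_bound hs Sl).
  rewrite ler_pdivrMr // => h.
  by rewrite ler_pdivrMr // mulrC.
by rewrite ler_pdivrMr // => h; rewrite ler_pdivrMr // mulrC.
Qed.

End Part1.

Section Part1b.
Variables (R : realType) (d : nat).
Notation vec := 'rV[R]_d.
Variable L : set vec.
Hypothesis hL : is_lattice L.
Implicit Types (K C : set vec) (z y a b : vec).

Lemma polarE C : origin_symmetric C -> polar C = Pset C.
Proof.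
move=> sC; apply/funext => y; apply/propext; split.
  move=> h a b Ca Cb; rewrite dotBr !(dotC y).
  have := h _ Ca; have := h _ (sC _ Cb); rewrite dotNl; lra.
move=> h x Cx; have := h _ _ Cx (sC _ Cx).
have -> : x - - x = 2%:R *: x by rewrite opprK scaler_nat mulr2n.
rewrite dotZr dotC; lra.
Qed.

Lemma noND_width K : ~ ND L -> lattice_width L K = 0.
Proof.
move=> nd; rewrite /lattice_width.
have -> : [set w | exists y, [/\ dual L y, y != 0 & w = dir_width K y]] = set0.
  apply/funext => w; apply/propext; split => // -[y [Dy ny _]]; apply: nd; by exists y.
by rewrite inf0.
Qed.

Lemma noND_diam K : ~ ND L -> lattice_diam (dual L) K = 0.
Proof.
move=> nd; rewrite /lattice_diam.
have -> : [set l | exists a b, [/\ seg_in K a b, lattice_segment (dual L) a b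
    & lattice_length (dual L) a b l]] = set0.
  apply/funext => w; apply/propext; split => // -[a [b [_ [_ [v [Dv nv _]]] _]]].
  apply: nd; by exists v.
by rewrite sup0.
Qed.

Lemma part1 C y : convex_body C -> origin_symmetric C ->
  width_direction L C y <-> diam_direction (dual L) (polar C) y.
Proof.
move=> cC sC; rewrite polarE //.
have [[M [M0 hM]] _ [x0 [e hb]] _] := cb_parts cC.
split.
- move=> [Dy ny hW].
  have nd : ND L by exists y.
  have w0 := width_pos hL cC nd.
  have hD := diam_eq hL cC nd.
  split => //; exists (- ((lattice_diam (dual L) (Pset C) / 2) *: y)).
  move=> t /andP[t0 t1].
  set D := lattice_diam (dual L) (Pset C).
  rewrite -/D in hD.
  have -> : (1 - t) *: - ((D / 2) *: y) + t *: (- ((D / 2) *: y) + D *: y) = ((t - 1/2) * D) *: y.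
    by apply/rowP => k; rewrite !mxE; ring.
  move=> p q Kp Kq; rewrite dotZl.
  have h1 := W_ge y hM Kp Kq; have h2 := W_ge y hM Kq Kp.
  rewrite -(opprB p q) dotNr hW in h2; rewrite hW in h1.
  move: (dot y (p - q)) h1 h2 => X h1 h2.
  set w := lattice_width L C in h1 h2 hD w0.
  have hX : (t - 1/2) * X <= w / 2 by nra.
  have h3 : D * ((t - 1/2) * X) <= D * (w / 2).
    by apply: ler_wpM2l => //; rewrite hD; apply: divr_ge0 => //; apply: ltW.
  have -> : (t - 1 / 2) * D * X = D * ((t - 1/2) * X) by ring.
  apply: (le_trans h3); rewrite hD.
  have -> : 4 / w * (w / 2) = 2 by field; apply: lt0r_neq0.
  by [].
- move=> [Dy ny [a hs]].
  have nd : ND L by exists y.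
  have w0 := width_pos hL cC nd.
  have hD := diam_eq hL cC nd.
  set D := lattice_diam (dual L) (Pset C) in hs hD.
  have D0 : 0 < D by rewrite hD; apply: divr_gt0.
  have [Pa Pb] := seg_ends hs.
  split => //; apply/eqP; rewrite eq_le; apply/andP; split; last exact: width_lb.
  have -> : lattice_width L C = 4 / D by rewrite hD; field; apply: lt0r_neq0.
  apply: W_le; first exact: cb_ne.
  move=> p q Kp Kq; rewrite ler_pdivlMr // mulrC -dotZl.
  have := Pb _ _ Kp Kq; have := Pa _ _ Kq Kp.
  rewrite -(opprB p q) dotNr dotDl; lra.
Qed.

End Part1b.

Section Part2.
Variables (R : realType) (d : nat).
Notation vec := 'rV[R]_d.
Implicit Types (K C : set vec) (z y a b x : vec).

Lemma cb_closed K : convex_body K -> closed K.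
Proof. by move=> [cK _ _]; apply: compact_closed => //; apply: norm_hausdorff. Qed.

Lemma sym_zero C : convex_body C -> origin_symmetric C -> C 0.
Proof.
move=> cC sC; have [_ cvC _ _] := cb_parts cC.
have [a Ca] := cb_ne cC.
have := cvC a (- a) (1/2) Ca (sC _ Ca) (ltac:(apply/andP; split; lra)).
have -> : (1 - 1/2) *: a + 1/2 *: - a = 0.
  by apply/rowP => k; rewrite !mxE; field.
by [].
Qed.

Lemma bip C x : convex_body C -> origin_symmetric C -> ~ C x ->
  exists y, Pset C y /\ 1 < dot x y.
Proof.
move=> cC sC nCx.
have [[M [M0 hM]] cvC _ _] := cb_parts cC.
have [z [g [g0 hz]]] := sep_closed cvC (cb_closed cC) M0 hM (cb_ne cC) nCx.
have h0 := hz _ (sym_zero cC sC); rewrite dot0r in h0.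
set m := dot z x - g / 2.
have m0 : 0 < m by rewrite /m; lra.
exists (m^-1 *: z); split.
  move=> a b Ca Cb; rewrite dotZl ler_pdivrMl // dotBr.
  have := hz _ Ca; have := hz _ (sC _ Cb); rewrite dotNr /m; lra.
by rewrite dotZr ltr_pdivlMl // mulr1 dotC /m; lra.
Qed.

Lemma int_trick (Ms : set vec) (e : R) (p : vec) (lam : R) : Defs.convex_set Ms -> 0 < e ->
  (forall w : vec, (forall j, `|w 0 j| < e) -> Ms w) ->
  (forall dl : R, 0 < dl -> exists m, Ms m /\ dot (m - p) (m - p) < dl) ->
  0 < lam -> lam < 1 -> Ms (lam *: p).
Proof.
move=> cvM e0 hb near l0 l1.
set rho := e * (1 - lam) / lam.
have r0 : 0 < rho by apply: divr_gt0 => //; apply: mulr_gt0 => //; lra.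
have [m [Mm hm]] := near _ (mulr_gt0 r0 r0).
have hj : forall j, `|p 0 j - m 0 j| < rho.
  move=> j; rewrite ltNge; apply/negP => hj.
  have := dot_coord (m - p) j; rewrite !mxE distrC expr2 => h.
  have := ler_pM (ltW r0) (ltW r0) hj hj; lra.
set w := (lam / (1 - lam)) *: (p - m).
have Mw : Ms w.
  apply: hb => j; rewrite /w !mxE normrM.
  have hl : 0 < lam / (1 - lam) by apply: divr_gt0 => //; lra.
  rewrite gtr0_norm //.
  have : lam / (1 - lam) * `|p 0 j - m 0 j| < lam / (1 - lam) * rho by rewrite ltr_pM2l.
  have -> : lam / (1 - lam) * rho = e by rewrite /rho; field; apply/andP; split; apply: lt0r_neq0; lra.
  by [].
have := cvM w m lam Mw Mm (ltac:(apply/andP; split; lra)).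
have -> : (1 - lam) *: w + lam *: m = lam *: p.
  apply/rowP => k; rewrite /w !mxE; field; apply: lt0r_neq0; lra.
by [].
Qed.

End Part2.

Section Part2b.
Variables (R : realType) (d : nat).
Notation vec := 'rV[R]_d.
Variable L : set vec.
Hypothesis hL : is_lattice L.
Implicit Types (K C : set vec) (z y a b x : vec).

Lemma two_scale x : x - - x = 2%:R *: x.
Proof. by rewrite opprK scaler_nat mulr2n. Qed.

Lemma exists_diff (A B : set vec) : A `<=` B -> A != B -> exists p, B p /\ ~ A p.
Proof.
move=> sAB /eqP nAB; apply: contrapT => h; apply: nAB; apply/seteqP; split => // q Bq.
by apply: contrapT => nq; apply: h; exists q.
Qed.

Lemma complete_to_reduced C : convex_body C -> origin_symmetric C ->
  lattice_complete (dual L) (Pset C) -> lattice_reduced L C.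
Proof.
move=> cC sC hcomp [K1 [cK1 sub1 ne1 eqW]]; apply: hcomp.
have [[M [M0 hM]] cvC [x0 [e hb]] cpC] := cb_parts cC.
have [[M1 [M10 hM1]] cvK1 [x1 [e1 hb1]] cpK1] := cb_parts cK1.
exists (Pset K1); split.
- exact: Pset_cb.
- exact: Pset_anti.
- apply/eqP => eqP1.
  have [p [Cp nK1p]] := exists_diff sub1 ne1.
  have [z [g [g0 hz]]] := sep_closed cvK1 (cb_closed cK1) M10 hM1 (cb_ne cK1) nK1p.
  set W1 := dir_width K1 z.
  have hW1 : W1 <= dir_width C z - g.
    apply: W_le; first exact: cb_ne.
    move=> u u' Ku Ku'; rewrite dotBr.
    have := hz _ Ku; have := W_ge z hM Cp (sub1 _ Ku'); rewrite dotBr; lra.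
  have nz : z != 0.
    apply/eqP => z0; have [u Ku] := cb_ne cK1; have := hz _ Ku; rewrite z0 !dot0l; lra.
  have W10 : 0 < W1 by apply: W_pos hM1 hb1 nz.
  have [a [b [Ca Cb hab]]] := W_gt hM (cb_ne cC) (c := W1) (ltac:(lra)).
  have Py : Pset K1 ((2 / W1) *: z).
    move=> u u' Ku Ku'; rewrite dotZl.
    have h1 : 2 / W1 * dot z (u - u') <= 2 / W1 * W1.
      by apply: ler_wpM2l; [apply: divr_ge0 => //; apply: ltW | apply: W_ge hM1 Ku Ku'].
    by apply: (le_trans h1); rewrite mulfVK ?lt0r_neq0.
  rewrite eqP1 in Py; have := Py _ _ Ca Cb; rewrite dotZl.
  have h1 : 2 / W1 * W1 < 2 / W1 * dot z (a - b).
    by rewrite ltr_pM2l //; apply: divr_gt0.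
  by rewrite mulfVK ?lt0r_neq0 // in h1; lra.
- case: (pselect (ND L)) => nd; last by rewrite !noND_diam.
  by rewrite (diam_eq hL cK1 nd) (diam_eq hL cC nd) eqW.
Qed.

End Part2b.

Section Part2c.
Variables (R : realType) (d : nat).
Notation vec := 'rV[R]_d.
Variable L : set vec.
Hypothesis hL : is_lattice L.
Implicit Types (K C : set vec) (z y a b x : vec).

Lemma reduced_to_complete C : convex_body C -> origin_symmetric C ->
  lattice_reduced L C -> lattice_complete (dual L) (Pset C).
Proof.
move=> cC sC hred [K2 [cK2 sub2 ne2 eqD]]; apply: hred.
have [[M [M0 hM]] cvC [x0 [e hb]] cpC] := cb_parts cC.
have [[M2 [M20 hM2]] cvK2 [x2 [e2 hb2]] cpK2] := cb_parts cK2.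
have subC : Pset K2 `<=` C.
  move=> x Px; apply: contrapT => nCx.
  have [y [Py hy]] := bip cC sC nCx.
  have := Px _ _ (sub2 _ Py) (sub2 _ (Pset_sym Py)).
  rewrite two_scale dotZr; lra.
exists (Pset K2); split => //.
- exact: Pset_cb.
- apply/eqP => eqPC.
  have [p [K2p nPp]] := exists_diff sub2 (ltac:(by rewrite eq_sym)).
  have [a [b [Ca Cb hab]]] : exists a b, [/\ C a, C b & 2 < dot p (a - b)].
    apply: contrapT => h; apply: nPp => a b Ca Cb; rewrite leNgt; apply/negP => hlt.
    by apply: h; exists a, b.
  set x1 := (1/2) *: (a - b).
  have Cx1 : C x1.
    have := cvC a (- b) (1/2) Ca (sC _ Cb) (ltac:(apply/andP; split; lra)).
    have -> : (1 - 1/2) *: a + 1/2 *: - b = x1 by apply/rowP => k; rewrite !mxE; field.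
    by [].
  have hx1p : 1 < dot x1 p by rewrite /x1 dotZl dotC; lra.
  clearbody x1.
  pose G := [set r | exists q, Pset C q /\ r = dot x1 q].
  have Gub : forall r, G r -> r <= 1.
    move=> r [q [Pq ->]]; have := Pq _ _ Cx1 (sC _ Cx1).
    rewrite two_scale dotZr dotC; lra.
  have P0 : Pset C 0 by move=> u v _ _; rewrite dot0l; lra.
  have hsG : has_sup G by split; [exists 0, 0; rewrite dot0r; split | exists 1].
  set g := sup G.
  have g1 : g <= 1 by apply: ge_sup => //; exists 0, 0; rewrite dot0r; split.
  have nx1 : x1 != 0 by apply/eqP => x10; move: hx1p; rewrite x10 dot0l; lra.
  have g0 : 0 < g.
    have [rho r0 hrho] := Pset_ball M0 hM.
    have n1 := nrm1_ge0 x1.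
    set c := rho / (2 * (nrm1 x1 + 1)).
    have c0 : 0 < c by apply: divr_gt0 => //; lra.
    have Pq : Pset C (c *: x1).
      apply: hrho => j; rewrite mxE normrM (gtr0_norm c0).
      have h1 : c * `|x1 0 j| <= c * nrm1 x1 by apply: ler_wpM2l; [apply: ltW | apply: coord_le_nrm1].
      apply: le_lt_trans h1 _.
      rewrite /c mulrAC ltr_pdivrMr; last lra.
      nra.
    have : c * dot x1 x1 <= g.
      apply: sup_upper_bound => //; exists (c *: x1); split; [exact: Pq | exact: (esym (dotZr _ _ _))].
    have dx : 0 < dot x1 x1.
      rewrite lt_neqAle dot_ge0 andbT; apply/eqP => h; move/eqP: nx1; apply; exact: dot_eq0.
    have := mulr_gt0 c0 dx; move=> h1 h2; lra.
  set x := g^-1 *: x1.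
  have Cx : C x.
    apply: contrapT => nCx; have [y [Py hy]] := bip cC sC nCx.
    have : dot x1 y <= g by apply: sup_upper_bound => //; exists y; split.
    move: hy; rewrite /x dotZl ltr_pdivlMl // mulr1; lra.
  have nPx : ~ Pset K2 x.
    move=> Px.
    set XP := dot x1 p.
    have eg0 : 0 < XP - g by rewrite /XP; lra.
    have := sup_adherent eg0 hsG; case=> r [q [Pq ->]] hr.
    have := Px _ _ K2p (sub2 _ (Pset_sym Pq)).
    rewrite opprK dotDr /x !dotZl -mulrDr ler_pdivrMl // => h.
    rewrite -/g in hr; move: hr h; rewrite /XP; lra.
  by apply: nPx; rewrite eqPC.
- case: (pselect (ND L)) => nd; last by rewrite !noND_width.
  have cK' := Pset_cb cK2.
  have [[M' [M'0 hM']] _ [x' [e' hb']] _] := cb_parts cK'.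
  have w0 := width_pos hL cC nd.
  have hD := diam_eq hL cC nd.
  set w := lattice_width L C in w0 hD *.
  set D := lattice_diam (dual L) (Pset C) in hD eqD.
  have D0 : 0 < D by rewrite hD; apply: divr_gt0.
  apply/eqP; rewrite eq_le; apply/andP; split.
    apply: width_glb => // z Dz nz; have h1 := width_lb cK' Dz nz.
    have h2 : dir_width (Pset K2) z <= dir_width C z.
      apply: W_le; first exact: cb_ne.
      by move=> u v Pu Pv; apply: W_ge hM (subC _ Pu) (subC _ Pv).
    exact: le_trans h1 h2.
  apply: width_glb => // z Dz nz.
  set W' := dir_width (Pset K2) z.
  have W'0 : 0 < W' by apply: W_pos hM' hb' nz.
  have key : forall s, D < s -> 4 / s < W'.
    move=> s Ds; have s0 : 0 < s by lra.
    pose Ms := [set m | exists a b, [/\ K2 a, K2 b & m = a - b]].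
    have cvM : Defs.convex_set Ms.
      move=> m1 m2 t [a1 [b1 [Ka1 Kb1 ->]]] [a2 [b2 [Ka2 Kb2 ->]]] ht.
      exists ((1 - t) *: a1 + t *: a2), ((1 - t) *: b1 + t *: b2); split.
      - exact: cvK2.
      - exact: cvK2.
      - by apply/rowP => k; rewrite !mxE; ring.
    have hMb : cbnd Ms (M2 + M2).
      move=> m [a [b [Ka Kb ->]]] j; rewrite !mxE.
      by apply: le_trans (ler_normB _ _) _; apply: lerD; apply: hM2.
    have e20 : 0 < e2 by case: hb2.
    have hb2' := hb2.2.
    have Mball : forall u : vec, (forall j, `|u 0 j| < e2) -> Ms u.
      move=> u hw; exists (x2 + u), (x2 + 0); split.
      - exact: hb2'.
      - by apply: hb2' => j; rewrite mxE normr0.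
      - by apply/rowP => k; rewrite !mxE; ring.
    have Mne : exists m, Ms m by exists 0; apply: Mball => j; rewrite mxE normr0.
    case: (pselect (exists dl : R, 0 < dl /\ forall m, Ms m -> dl <= dot (m - s *: z) (m - s *: z))) => [[dl [dl0 hdl]] | nsep].
    + have [z' [g [g0 hz']]] := sep_core cvM (addr_ge0 M20 M20) hMb Mne dl0 hdl.
      have h0 : dot z' 0 <= dot z' (s *: z) - g by apply: hz'; apply: Mball => j; rewrite mxE normr0.
      rewrite dot0r in h0.
      set c := dot z' (s *: z) - g / 2.
      have c0 : 0 < c by rewrite /c; lra.
      have Pxx : Pset K2 ((2 / c) *: z').
        move=> a b Ka Kb; rewrite dotZl.
        have h1 : dot z' (a - b) <= c.
          have := hz' (a - b) (ltac:(by exists a, b)); rewrite /c; lra.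
        have h2 : 2 / c * dot z' (a - b) <= 2 / c * c.
          by apply: ler_wpM2l => //; apply: divr_ge0 => //; apply: ltW.
        by apply: (le_trans h2); rewrite mulfVK ?lt0r_neq0.
      have hW := W_ge z hM' Pxx (Pset_sym Pxx).
      rewrite -/W' two_scale dotZr dotZr in hW.
      have hY : c < s * dot z z' by rewrite -dotZl dotC /c; lra.
      rewrite ltr_pdivrMr //.
      have h3 : 4 / c * c < 4 / c * (s * dot z z') by rewrite ltr_pM2l //; apply: divr_gt0.
      rewrite mulfVK ?lt0r_neq0 // in h3.
      have e3 : 2%:R * (2 / c * dot z z') * s = 4 / c * (s * dot z z') by ring.
      have hs' : 2%:R * (2 / c * dot z z') * s <= W' * s by apply: ler_wpM2r => //; apply: ltW.
      lra.
    + have near : forall dl : R, 0 < dl -> exists m, Ms m /\ dot (m - s *: z) (m - s *: z) < dl.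
        move=> dl dl0; apply: contrapT => h; apply: nsep; exists dl; split => // m Mm.
        rewrite leNgt; apply/negP => hm; apply: h; by exists m.
      set s1 := (s + D) / 2.
      have s10 : 0 < s1 by rewrite /s1; lra.
      have hl0 : 0 < s1 / s by apply: divr_gt0.
      have hl1 : s1 / s < 1 by rewrite ltr_pdivrMr // mul1r /s1; lra.
      have := int_trick cvM e20 Mball near hl0 hl1.
      rewrite scalerA mulfVK ?lt0r_neq0 //.
      case=> a [b [Ka Kb hab]].
      have [l [hl hseg hlen]] := seg_len hL Dz nz s10 (esym hab).
      have hin : seg_in K2 b a by move=> t ht; exact: cvK2.
      pose S2 := [set l | exists a b, [/\ seg_in K2 a b, lattice_segment (dual L) a b & lattice_length (dual L) a b l]].
      have Sl : S2 l by exists b, a.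
      have hs : has_sup S2.
        apply: contrapT => nh; move: eqD; rewrite /lattice_diam -/S2 sup_out // => h; lra.
      have := sup_upper_bound hs Sl.
      have -> : sup S2 = D by rewrite -eqD.
      rewrite /s1 in hl; lra.
  rewrite leNgt; apply/negP => hlt.
  have hDs : D < 4 / W'.
    rewrite hD ltr_pdivrMr //.
    have -> : 4 / W' * w = 4 + 4 * (w - W') / W' by field; apply: lt0r_neq0.
    have : 0 < 4 * (w - W') / W' by apply: divr_gt0 => //; apply: mulr_gt0 => //; lra.
    lra.
  have := key (4 / W') hDs.
  have -> : 4 / (4 / W') = W' by field; apply: lt0r_neq0.
  by rewrite ltxx.
Qed.

End Part2c.

Section Poly.
Variables (R : realType) (d n : nat) (v : 'I_n -> 'rV[R]_d).

Definition pf (lam : 'rV[R]_n) : 'rV[R]_d := \sum_(i < n) lam 0 i *: v i.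
Definition simplex := [set lam : 'rV[R]_n | (forall i, 0 <= lam 0 i) /\ \sum_(i < n) lam 0 i = 1].

Lemma pf_coord lam j : pf lam 0 j = \sum_i lam 0 i * v i 0 j.
Proof. by rewrite /pf summxE; apply: eq_bigr => i _; rewrite mxE. Qed.

Lemma pf_cont : continuous pf.
Proof.
move=> lam B /nbhsE' [e e0 he]; apply/nbhsE'.
set Bv := \sum_i nrm1 (v i).
have Bv0 : 0 <= Bv by apply: sumr_ge0 => i _; apply: nrm1_ge0.
exists (e / (Bv + 1)); first by apply: divr_gt0 => //; lra.
move=> mu hmu; apply: he => j.
rewrite !pf_coord -sumrB.
apply: le_lt_trans (ler_norm_sum _ _ _) _.
have h1 : forall i : 'I_n, `|lam 0 i * v i 0 j - mu 0 i * v i 0 j| <= e / (Bv + 1) * nrm1 (v i).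
  move=> i; rewrite -mulrBl normrM; apply: ler_pM => //.
    by apply: ltW.
  exact: coord_le_nrm1.
apply: le_lt_trans (ler_sum _ (fun i _ => h1 i)) _.
rewrite -mulr_sumr -/Bv mulrAC ltr_pdivrMr; last lra.
nra.
Qed.

Lemma simplex_closed : closed simplex.
Proof.
move=> lam cl; split.
  move=> i; rewrite leNgt; apply/negP => hi.
  have g0 : 0 < - lam 0 i by lra.
  have [mu [[mu0 _] hb]] := cl _ (nbhsx_ballx lam _ g0).
  move/ballE': hb => [_ hb]; have := hb i; have := mu0 i.
  move=> h1 h2; have := ler_norm (mu 0 i - lam 0 i); rewrite distrC; lra.
apply: contrapT => hs.
set g := `|\sum_(i < n) lam 0 i - 1|.
have g0 : 0 < g by rewrite normr_gt0 subr_eq0; apply/eqP.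
have n0 : (0 : R) <= n%:R := ler0n _ _.
have r0 : 0 < g / (n%:R + 1) by apply: divr_gt0 => //; lra.
have [mu [[_ mu1] hb]] := cl _ (nbhsx_ballx lam _ r0).
move/ballE': hb => [_ hb].
have h1 : `|\sum_(i < n) lam 0 i - \sum_(i < n) mu 0 i| <= n%:R * (g / (n%:R + 1)).
  rewrite -sumrB; apply: le_trans (ler_norm_sum _ _ _) _.
  by apply: sum_const_lt => i; apply: ltW.
rewrite mu1 -/g in h1.
have : n%:R * (g / (n%:R + 1)) < g.
  rewrite mulrA ltr_pdivrMr; last lra.
  nra.
lra.
Qed.

Lemma simplex_compact : compact simplex.
Proof.
apply: bounded_closed_compact; last exact: simplex_closed.
apply: (@cbnd_bounded _ _ _ 1) => // lam [l0 l1] j.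
rewrite ger0_norm // -l1 (bigD1 j) //= lerDl; by apply: sumr_ge0.
Qed.

End Poly.

Lemma polytope_cb (R : realType) (d : nat) (C : set 'rV[R]_d) : full_polytope C -> convex_body C.
Proof.
move=> [[n [v hC]] hint].
have imC : C = pf v @` simplex (R := R) (n := n).
  rewrite hC; apply/seteqP; split.
  - move=> x [lam [l0 l1 ->]]; exists (\row_i lam i).
      by split => [i|]; rewrite ?mxE //; rewrite -l1; apply: eq_bigr => i _; rewrite mxE.
    by rewrite /pf; apply: eq_bigr => i _; rewrite mxE.
  - by move=> x [mu [m0 m1] <-]; exists (fun i => mu 0 i); split.
split.
- rewrite imC; apply: continuous_compact; last exact: simplex_compact.
  by apply: continuous_subspaceT; exact: pf_cont.
- rewrite hC => a b t [la [la0 la1 ->]] [lb [lb0 lb1 ->]] /andP[t0 t1].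
  exists (fun i => (1 - t) * la i + t * lb i); split.
  + by move=> i; apply: addr_ge0; apply: mulr_ge0 => //; lra.
  + by rewrite big_split /= -!mulr_sumr la1 lb1; ring.
  + rewrite !scaler_sumr -big_split /=; apply: eq_bigr => i _; apply/rowP => k; rewrite !mxE; ring.
- exact: hint.
Qed.

Unset Implicit Arguments.
Theorem theorem3p8 (R : realType) (d : nat) (C L : set 'rV[R]_d) :
  full_polytope C -> origin_symmetric C -> is_lattice L ->
  (forall y, width_direction L C y <-> diam_direction (dual L) (polar C) y) /\
  (lattice_reduced L C <-> lattice_complete (dual L) (polar C)).
Proof.
move=> fC sC hL; have cC := polytope_cb fC.
split; first by move=> y; exact: part1.
rewrite polarE //; split.
- exact: reduced_to_complete.
- exact: complete_to_reduced.
Qed.
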